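(* Let $\mathsf V$ be a variety and $\theta$ a congruence of $\mathbf F_{\mathsf V}(z)$. Then $\theta$ is an E-congruence if and only if there are exact congruences $\theta_1,\dots,\theta_m$ of $\mathbf F_{\mathsf V}(z)$ (for some $m\ge1$) such that $\theta=\bigcap_{k=1}^m\theta_k$.
   Context: $\mathbf F_{\mathsf V}(z)$ is the free algebra of the variety $\mathsf V$ on one generator $z$. An algebra is exact in $\mathsf V$ if it is isomorphic to a finitely generated subalgebra of a finitely generated free algebra of $\mathsf V$. A congruence $\theta$ of $\mathbf F_{\mathsf V}(z)$ is exact if $\mathbf F_{\mathsf V}(z)/\theta$ is exact in $\mathsf V$. An algebraic e-generalization problem is a homomorphism $h:\mathbf F_{\mathsf V}(z)\to\prod_{k=1}^m\mathbf E_k$ ($m\ge1$) where each $\mathbf E_k$ is a 1-generated exact algebra in $\mathsf V$ and $p_k\circ h$ is surjective onto $\mathbf E_k$ for each projection $p_k$. A congruence $\theta$ of $\mathbf F_{\mathsf V}(z)$ is an E-congruence if $\theta=\ker(h)$ for some algebraic e-generalization problem $h$, where $\ker(h)=\{(a,a'):h(a)=h(a')\}$. *)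

(* Defs.v *)
From mathcomp Require Import all_boot.
From Stdlib Require Import ClassicalEpsilon.
From Stdlib Require List.

Set Implicit Arguments.
Unset Strict Implicit.
Unset Printing Implicit Defensive.

Record signature := Signature { ops : Type; arity : ops -> nat }.

Record algebra (S : signature) := Algebra {
  carrier :> Type;
  op : forall f : ops S, ('I_(arity f) -> carrier) -> carrier }.
Arguments op {S} a f _ : rename.

Inductive term (S : signature) (X : Type) : Type :=
| Var : X -> term S X
| App : forall f : ops S, ('I_(arity f) -> term S X) -> term S X.
Arguments Var {S X} x.
Arguments App {S X} f ts.

Fixpoint eval (S : signature) (X : Type) (A : algebra S) (v : X -> A)
    (t : term S X) : A :=
  match t with
  | Var x => v x
  | App f ts => op A f (fun i => eval v (ts i))
  end.

(* A variety is given (Birkhoff) as the class of models of a set of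
   identities, i.e. pairs of terms in countably many variables. *)
Definition identities (S : signature) := term S nat -> term S nat -> Prop.

Definition in_variety (S : signature) (V : identities S) (A : algebra S) : Prop :=
  forall t s, V t s -> forall v : nat -> A, eval v t = eval v s.

Definition hom (S : signature) (A B : algebra S) (h : A -> B) : Prop :=
  forall f (args : 'I_(arity f) -> A), h (op A f args) = op B f (fun i => h (args i)).

Definition isomorphic (S : signature) (A B : algebra S) : Prop :=
  exists h : A -> B, hom h /\ bijective h.

Definition congruence (S : signature) (A : algebra S) (th : A -> A -> Prop) : Prop :=
  (forall a, th a a) /\ (forall a b, th a b -> th b a) /\
  (forall a b c, th a b -> th b c -> th a c) /\
  (forall f (args1 args2 : 'I_(arity f) -> A),
     (forall i, th (args1 i) (args2 i)) -> th (op A f args1) (op A f args2)).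

Definition quot_carrier (S : signature) (A : algebra S) (th : A -> A -> Prop) :=
  {P : A -> Prop | exists a : A, P = th a}.

Definition cls (S : signature) (A : algebra S) (th : A -> A -> Prop) (a : A)
  : quot_carrier th := exist _ (th a) (ex_intro _ a erefl).

Definition rep (S : signature) (A : algebra S) (th : A -> A -> Prop)
  (q : quot_carrier th) : A :=
  proj1_sig (constructive_indefinite_description _ (proj2_sig q)).

Definition quotient (S : signature) (A : algebra S) (th : A -> A -> Prop)
  : algebra S :=
  @Algebra S (quot_carrier th)
    (fun f args => cls th (op A f (fun i => rep (args i)))).

Definition term_algebra (S : signature) (X : Type) : algebra S :=
  @Algebra S (term S X) (@App S X).

Definition veq (S : signature) (V : identities S) (X : Type)
  (t s : term S X) : Prop :=
  forall A : algebra S, in_variety V A -> forall v : X -> A, eval v t = eval v s.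

Definition free_algebra (S : signature) (V : identities S) (X : Type) : algebra S :=
  quotient (A := term_algebra S X) (veq V (X:=X)).

Inductive generated (S : signature) (A : algebra S) (G : A -> Prop) : A -> Prop :=
| gen_base a : G a -> generated G a
| gen_op f (args : 'I_(arity f) -> A) :
    (forall i, generated G (args i)) -> generated G (op A f args).

Definition subalgebra (S : signature) (A : algebra S) (G : A -> Prop) : algebra S :=
  @Algebra S {a : A | generated G a}
    (fun f args => exist _ (op A f (fun i => proj1_sig (args i)))
                     (gen_op (fun i => proj2_sig (args i)))).

Definition prod_algebra (S : signature) (I : Type) (E : I -> algebra S)
  : algebra S :=
  @Algebra S (forall i, E i) (fun f args => fun i => op (E i) f (fun j => args j i)).

Definition one_generated (S : signature) (A : algebra S) : Prop :=
  exists a : A, forall b : A, generated (fun x => x = a) b.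

(* A is exact in V: isomorphic to a finitely generated subalgebra of a
   finitely generated free algebra F_V(x_0,...,x_{n-1}). *)
Definition exact_algebra (S : signature) (V : identities S) (A : algebra S) : Prop :=
  exists (n : nat) (gens : list (free_algebra V 'I_n)),
    isomorphic A (subalgebra (fun a => List.In a gens)).

Definition F1 (S : signature) (V : identities S) : algebra S := free_algebra V unit.

Definition exact_congruence (S : signature) (V : identities S)
  (th : F1 V -> F1 V -> Prop) : Prop :=
  exact_algebra V (quotient th).

Definition e_gen_problem (S : signature) (V : identities S) (m : nat)
  (E : 'I_m -> algebra S) (h : F1 V -> prod_algebra E) : Prop :=
  (0 < m)%N /\
  (forall k, one_generated (E k) /\ exact_algebra V (E k)) /\
  hom (B := prod_algebra E) h /\
  (forall k (e : E k), exists a, h a k = e).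

Definition E_congruence (S : signature) (V : identities S)
  (th : F1 V -> F1 V -> Prop) : Prop :=
  exists (m : nat) (E : 'I_m -> algebra S) (h : F1 V -> prod_algebra E),
    e_gen_problem h /\ (forall a b, th a b <-> h a = h b).

(* Main.v *)
From Stdlib Require Import FunctionalExtensionality PropExtensionality ProofIrrelevance ClassicalEpsilon.
Require Import Defs.
From mathcomp Require Import all_boot.

Set Implicit Arguments.
Unset Strict Implicit.
Unset Printing Implicit Defensive.

Lemma quot_eq (S : signature) (A : algebra S) (th : A -> A -> Prop)
  (q1 q2 : quot_carrier th) : proj1_sig q1 = proj1_sig q2 -> q1 = q2.
Proof.
destruct q1 as [P1 p1]; destruct q2 as [P2 p2]; simpl => E; subst.
f_equal; apply proof_irrelevance.
Qed.

Lemma rep_spec (S : signature) (A : algebra S) (th : A -> A -> Prop)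
  (q : quot_carrier th) : proj1_sig q = th (rep q).
Proof.
rewrite /rep.
by case: (constructive_indefinite_description _ (proj2_sig q)).
Qed.

Lemma cls_eq (S : signature) (A : algebra S) (th : A -> A -> Prop) a b :
  congruence th -> th a b -> cls th a = cls th b.
Proof.
move=> [Hr [Hs [Ht _]]] Hab; apply: quot_eq => /=.
apply: functional_extensionality => x; apply: propositional_extensionality.
split => H; eauto.
Qed.

Lemma cls_eq_inv (S : signature) (A : algebra S) (th : A -> A -> Prop) a b :
  congruence th -> cls th a = cls th b -> th a b.
Proof.
move=> [Hr _] E; have := f_equal (@proj1_sig _ _) E => /= ->; exact: Hr.
Qed.

Lemma cls_rep (S : signature) (A : algebra S) (th : A -> A -> Prop)
  (q : quot_carrier th) : cls th (rep q) = q.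
Proof. apply: quot_eq => /=; by rewrite rep_spec. Qed.

Lemma rep_cls (S : signature) (A : algebra S) (th : A -> A -> Prop) a :
  congruence th -> th a (rep (cls th a)).
Proof.
move=> Hc; apply: cls_eq_inv => //; by rewrite cls_rep.
Qed.

Lemma cls_hom (S : signature) (A : algebra S) (th : A -> A -> Prop) :
  congruence th -> hom (B := quotient th) (cls th).
Proof.
move=> Hc f args /=; apply: cls_eq; first exact: Hc.
case: (Hc) => [_ [Hs [_ Ho]]]; apply: Ho => i; apply: rep_cls; exact: Hc.
Qed.

Lemma hom_gen (S : signature) (A B : algebra S) (h : A -> B) g a :
  hom h -> generated (fun x => x = g) a -> generated (fun y => y = h g) (h a).
Proof.
move=> Hh; elim => [x -> | f args _ IH]; first exact: gen_base.
rewrite Hh; exact: gen_op.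
Qed.

Lemma veq_cong (S : signature) (V : identities S) (X : Type) :
  congruence (A := term_algebra S X) (veq V (X:=X)).
Proof.
split; first by [].
split; first by move=> a b H A HA v; rewrite H.
split; first by move=> a b c H1 H2 A HA v; rewrite H1 // H2.
move=> f a1 a2 H A HA v /=; congr (op A f _).
apply: functional_extensionality => i; exact: H.
Qed.

Lemma term_gen (S : signature) (V : identities S) (t : term S unit) :
  generated (A := F1 V) (fun x => x = cls (A := term_algebra S unit) (veq V (X:=unit)) (Var tt))
    (cls (A := term_algebra S unit) (veq V (X:=unit)) t).
Proof.
elim: t => [[]|f ts IH]; first exact: gen_base.
have := cls_hom (veq_cong V unit) ts => /= ->.
exact: gen_op.
Qed.

Lemma quot_one_gen (S : signature) (V : identities S) (th : F1 V -> F1 V -> Prop) :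
  congruence th -> one_generated (quotient th).
Proof.
move=> Hc; exists (cls th (cls (A := term_algebra S unit) (veq V (X:=unit)) (Var tt))) => b.
rewrite -(cls_rep b).
have -> : rep b = cls (A := term_algebra S unit) (veq V (X:=unit)) (rep (rep b)) by rewrite cls_rep.
apply: (@hom_gen S (F1 V) (quotient th) (cls th) _ _ (cls_hom Hc)).
exact: term_gen.
Qed.

Lemma iso_trans (S : signature) (A B C : algebra S) :
  isomorphic A B -> isomorphic B C -> isomorphic A C.
Proof.
move=> [f [Hf bf]] [g [Hg bg]]; exists (g \o f); split.
  by move=> o args /=; rewrite Hf Hg.
exact: bij_comp.
Qed.

Theorem theorem4p4 (S : signature) (V : identities S)
  (th : F1 V -> F1 V -> Prop) :
  congruence th ->
  (E_congruence th <->
   exists (m : nat) (ths : 'I_m -> (F1 V -> F1 V -> Prop)),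
     (0 < m)%N /\
     (forall k, congruence (ths k) /\ exact_congruence (ths k)) /\
     (forall a b, th a b <-> (forall k, ths k a b))).
Proof.
move=> Hth; split.
- move=> [m [E [h [[Hm [HE [Hh Hs]]] Hker]]]].
  exists m, (fun k a b => h a k = h b k); split => //; split.
  + move=> k.
    have Hc : congruence (A := F1 V) (fun a b => h a k = h b k).
      split; first by [].
      split; first by move=> a b ->.
      split; first by move=> a b c -> ->.
      move=> f a1 a2 H; rewrite !Hh /=; congr (op _ f _).
      apply: functional_extensionality => i; exact: H.
    split => //.
    have [n [gens Hiso]] := (HE k).2.
    exists n, gens; apply: iso_trans Hiso.
    pose g (e : E k) := cls (fun a b => h a k = h b k)
        (proj1_sig (constructive_indefinite_description _ (Hs k e))).
    exists (fun q => h (rep q) k); split.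
      move=> f args /=.
      have := rep_cls (op (F1 V) f (fun i => rep (args i))) Hc => /= <-.
      by rewrite Hh.
    exists g.
      move=> q; rewrite /g; case: constructive_indefinite_description => a Ha /=.
      by rewrite -(cls_rep q); apply: cls_eq.
    move=> e; rewrite /g; case: constructive_indefinite_description => a Ha /=.
    by rewrite -(rep_cls a Hc).
  + move=> a b; rewrite Hker; split => [-> //|H].
    exact: functional_extensionality_dep.
- move=> [m [ths [Hm [Hk Hiff]]]].
  exists m, (fun k => quotient (ths k)), (fun a k => cls (ths k) a).
  split; last first.
    move=> a b; rewrite Hiff; split => H.
      apply: functional_extensionality_dep => k; apply: cls_eq => //; exact: (Hk k).1.
    move=> k; apply: cls_eq_inv; first exact: (Hk k).1.
    exact: (equal_f_dep H k).
  split => //; split.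
    move=> k; split; [exact: quot_one_gen (Hk k).1 | exact: (Hk k).2].
  split.
    move=> f args; apply: functional_extensionality_dep => k /=.
    exact: (cls_hom (Hk k).1).
  move=> k e; exists (rep e); exact: cls_rep.
Qed.
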